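(* Consider progressive filtering with an ensemble of $M$ selection strategies $s_1,\dots,s_M$, $J$ batches per strategy per round, sampling ratio $\alpha\in(0,1)$ and batch size $b$. Let $r\ge 1$ be a round, let $\mathbf{x}\in\mathcal{C}_{r-1}$, and for each $m\in\{1,\dots,M\}$ let $p_{m,r}(\mathbf{x})$ be the probability that strategy $s_m$ includes $\mathbf{x}$ in a selected batch during round $r$, given that $\mathbf{x}$ is present in the random subsample. Then the probability that $\mathbf{x}$ survives round $r$, $P_r(\mathbf{x})=\Pr(\mathbf{x}\in\mathcal{C}_r\mid \mathbf{x}\in\mathcal{C}_{r-1})$, satisfies $$P_r(\mathbf{x})\ \ge\ 1-\Big(1-\alpha\cdot\max_{m\in\{1,\dots,M\}} p_{m,r}(\mathbf{x})\Big)^J.$$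
   Context: Setting (pool-based batch active learning). $\mathcal{U}_t$ is a finite unlabeled pool. A selection strategy $s$ is a (possibly randomized) map taking a finite set $\mathcal{P}$ of instances and a batch size $b$ to a subset $s(\mathcal{P},b)\subseteq\mathcal{P}$ of size $b$. Progressive filtering with strategies $s_1,\dots,s_M$, number of rounds $R$, number of batches per strategy $J$, and sampling ratio $\alpha\in(0,1)$ produces pools $\mathcal{C}_0=\mathcal{U}_t\supseteq \mathcal{C}_1\supseteq\dots\supseteq\mathcal{C}_R$ by $$\mathcal{C}_r=\bigcup_{m=1}^M\bigcup_{j=1}^J s_m\big(\mathrm{SubSample}(\mathcal{C}_{r-1},\alpha|\mathcal{C}_{r-1}|),\,b\big),$$ where each $\mathrm{SubSample}(\mathcal{C},n)$ draws $n$ instances of $\mathcal{C}$ uniformly at random without replacement, a fresh independent subsample being drawn for each of the $M\cdot J$ pairs $(m,j)$ in each round, so that each fixed instance of $\mathcal{C}_{r-1}$ lies in a given subsample with probability $\alpha$, and the $M\cdot J$ draws of a round are independent. *)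

(* Defs.v *)
From mathcomp Require Import all_boot all_order all_algebra.
Set Implicit Arguments. Unset Strict Implicit. Unset Printing Implicit Defensive.
Import Order.TTheory GRing.Theory Num.Theory.
Local Open Scope ring_scope.

(* pmf of SubSample(C, n): a uniformly random n-subset of C
   (n draws uniformly without replacement, viewed as a set). *)
Definition subsample_pmf (R : realFieldType) (T : finType)
  (C : {set T}) (n : nat) (S : {set T}) : R :=
  if (S \subset C) && (#|S| == n) then ('C(#|C|, n)%:R)^-1 else 0.

(* A randomized selection strategy: s P b is the pmf of the output s(P,b). *)
Definition strategy (R : realFieldType) (T : finType) :=
  {set T} -> nat -> {set T} -> R.

Definition is_strategy (R : realFieldType) (T : finType)
  (s : strategy R T) (b : nat) : Prop :=
  forall P : {set T}, (b <= #|P|)%N ->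
    (forall B, 0 <= s P b B) /\ (\sum_(B : {set T}) s P b B = 1) /\
    (forall B, s P b B != 0 -> (B \subset P) && (#|B| == b)).

Definition pair_pmf (R : realFieldType) (T : finType) (C : {set T}) (n : nat)
  (s : strategy R T) (b : nat) (SB : {set T} * {set T}) : R :=
  subsample_pmf R C n SB.1 * s SB.1 b SB.2.

(* p_{m,r}(x) = Pr(x \in s_m(S,b) | x \in S), S = SubSample(C, n) *)
Definition incl_prob (R : realFieldType) (T : finType) (C : {set T}) (n : nat)
  (s : strategy R T) (b : nat) (x : T) : R :=
  (\sum_(SB : {set T} * {set T})
      pair_pmf C n s b SB * ((x \in SB.1) && (x \in SB.2))%:R)
  / (\sum_(S : {set T}) subsample_pmf R C n S * (x \in S)%:R).

(* One round of progressive filtering from pool C = C_{r-1}: for each of the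
   M*J pairs (m,j) an independent subsample S_{m,j} and batch B_{m,j} ~ s_m(S_{m,j},b);
   C_r = \bigcup B_{m,j}.  survival_prob = Pr(x \in C_r). *)
Definition survival_prob (R : realFieldType) (T : finType) (C : {set T})
  (n : nat) (M J : nat) (s : 'I_M -> strategy R T) (b : nat) (x : T) : R :=
  \sum_(w : {ffun 'I_M * 'I_J -> {set T} * {set T}})
     (\prod_(i : 'I_M * 'I_J) pair_pmf C n (s i.1) b (w i))
     * (x \in \bigcup_(i : 'I_M * 'I_J) (w i).2)%:R.

(* Main.v *)
Require Import Defs.
From mathcomp Require Import all_boot all_order all_algebra.
From mathcomp Require Import lra.
Import Order.TTheory GRing.Theory Num.Theory.
Local Open Scope ring_scope.

Lemma count_with (T : finType) (C : {set T}) (x : T) (n : nat) :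
  x \in C ->
  #|[set S : {set T} | (S \subset C) && (#|S| == n.+1) && (x \in S)]| = 'C(#|C|.-1, n).
Proof.
move=> xC.
have -> : [set S : {set T} | (S \subset C) && (#|S| == n.+1) && (x \in S)] =
   [set x |: S' | S' in [set S' : {set T} | S' \subset C :\ x & #|S'| == n]].
  apply/setP=> S; rewrite !inE; apply/idP/imsetP.
  - move=> /andP[/andP[sSC /eqP cS] xS]; exists (S :\ x).
      rewrite inE; apply/andP; split; first by apply: setSD.
      by move: cS; rewrite (cardsD1 x S) xS add1n => -[->].
    by rewrite setD1K.
  - case=> S'; rewrite inE => /andP[sS' /eqP cS'] ->.
    have xS' : x \notin S' by apply/negP=> /(subsetP sS'); rewrite !inE eqxx.
    rewrite setU11 andbT cardsU1 xS' cS' eqxx andbT.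
    rewrite subUset sub1set xC /=.
    by apply: subset_trans sS' _; apply: subsetDl.
rewrite card_in_imset; first by rewrite cards_draws (cardsD1 x C) xC.
move=> A B; rewrite !inE => /andP[sA _] /andP[sB _] eAB.
have xA : x \notin A by apply/negP=> /(subsetP sA); rewrite !inE eqxx.
have xB : x \notin B by apply/negP=> /(subsetP sB); rewrite !inE eqxx.
by rewrite -(setU1K xA) -(setU1K xB) eAB.
Qed.
Lemma sum_pmf (R : realFieldType) (T : finType) (C : {set T}) (n : nat) :
  (n <= #|C|)%N -> \sum_S subsample_pmf R C n S = 1.
Proof.
move=> hn; rewrite /subsample_pmf -big_mkcond sumr_const /=.
have -> : #|[pred S : {set T} | (S \subset C) && (#|S| == n)]| = 'C(#|C|, n).
  by rewrite -cards_draws; apply: eq_card => S; rewrite inE.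
rewrite -[_ *+ 'C(_,_)]mulr_natr mulVf // pnatr_eq0 -lt0n bin_gt0 //.
Qed.

Lemma den_pmf (R : realFieldType) (T : finType) (C : {set T}) (n : nat) x :
  x \in C -> (0 < n)%N -> (n <= #|C|)%N ->
  \sum_S subsample_pmf R C n S * (x \in S)%:R = n%:R / #|C|%:R.
Proof.
move=> xC n0 hn.
have -> : \sum_S subsample_pmf R C n S * (x \in S)%:R =
   \sum_(S : {set T}) (if (S \subset C) && (#|S| == n) && (x \in S)
   then ('C(#|C|, n)%:R : R)^-1 else 0).
  apply: eq_bigr => S _; rewrite /subsample_pmf; case: ifP; case: (x \in S);
     by rewrite ?andbT ?andbF ?mulr1 ?mulr0 ?mul0r => // ->.
rewrite -big_mkcond sumr_const /=.
case: n n0 hn => [//|n] _ hn.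
have -> : #|[pred S : {set T} | (S \subset C) && (#|S| == n.+1) && (x \in S)]|
   = 'C(#|C|.-1, n).
  by rewrite -(@count_with _ _ _ n xC); apply: eq_card => S; rewrite inE.
have c0 : #|C|%:R != 0 :> R by rewrite pnatr_eq0 -lt0n (leq_trans _ hn).
have b0 : 'C(#|C|, n.+1)%:R != 0 :> R by rewrite pnatr_eq0 -lt0n bin_gt0.
rewrite -[_ *+ 'C(_,_)]mulr_natr; apply: (canRL (mulfK c0)).
rewrite mulrAC -mulrA -natrM mul_bin_diag natrM mulrA mulrAC mulVf // mul1r.
by [].
Qed.

Lemma max_cases (R : realFieldType) M (F : 'I_M -> R) :
  \big[Num.max/0]_(m < M) F m = 0 \/ exists m, \big[Num.max/0]_(m < M) F m = F m.
Proof.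
apply: (big_ind (fun v => v = 0 \/ exists m, v = F m)); first by left.
  move=> u v hu hv; have [->|->] : Num.max u v = u \/ Num.max u v = v.
    by rewrite /Order.max; case: ifP; auto.
  by []. by [].
by move=> m _; right; exists m.
Qed.

Lemma indic_union (R : realFieldType) (T : finType) (I : finType) (A : I -> {set T}) x :
  (x \in \bigcup_i A i)%:R = 1 - \prod_i (x \notin A i)%:R :> R.
Proof.
case: (boolP (x \in \bigcup_i A i)) => [/bigcupP[i _ xi] | nx].
  by rewrite (bigD1 i) //= xi mul0r subr0.
rewrite big1 ?subrr // => i _.
have -> : x \notin A i by apply: contra nx => h; apply/bigcupP; exists i.
by [].
Qed.

Theorem theorem1 (R : realFieldType) (T : finType) (C : {set T}) (x : T)
  (M J b n : nat) (alpha : R) (s : 'I_M -> strategy R T) :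
  x \in C -> (0 < M)%N -> (0 < J)%N ->
  0 < alpha -> alpha < 1 ->
  alpha * #|C|%:R = n%:R -> (b <= n)%N ->
  (forall m, is_strategy (s m) b) ->
  1 - (1 - alpha * \big[Num.max/0]_(m < M) incl_prob C n (s m) b x) ^+ J
    <= survival_prob C n J s b x.
Proof.
move=> xC M0 J0 a0 a1 hn bn hs.
have c0 : (0 < #|C|)%N by apply/card_gt0P; exists x.
have c0R : 0 < #|C|%:R :> R by rewrite ltr0n.
have nC : (n <= #|C|)%N.
  rewrite -(ler_nat R) -hn; rewrite -[leRHS]mul1r; apply: ler_pM => //.
  exact: ltW. exact: ltW.
have n0 : (0 < n)%N by rewrite -(ltr_nat R) -hn mulr_gt0.
have f_ge0 m SB : 0 <= pair_pmf C n (s m) b SB.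
  rewrite /pair_pmf /subsample_pmf; case: ifP => [/andP[sS /eqP cS]|_]; last by rewrite mul0r.
  apply: mulr_ge0; first by rewrite invr_ge0 ler0n.
  by have [H1 _] := hs m SB.1 (eq_ind_r (fun k => (b <= k)%N) bn cS).
have f_supp m SB : pair_pmf C n (s m) b SB != 0 -> SB.2 \subset SB.1.
  rewrite /pair_pmf /subsample_pmf; case: ifP => [/andP[sS /eqP cS]|_]; last by rewrite mul0r eqxx.
  rewrite mulf_eq0 negb_or => /andP[_ h].
  have [_ [_ H3]] := hs m SB.1 (eq_ind_r (fun k => (b <= k)%N) bn cS).
  by case/andP: (H3 _ h).
have f_sum m : \sum_SB pair_pmf C n (s m) b SB = 1.
  have -> : \sum_SB pair_pmf C n (s m) b SB =
     \sum_(S : {set T}) \sum_(B : {set T}) pair_pmf C n (s m) b (S, B).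
    by rewrite pair_big /=; apply: eq_bigr => -[].
  rewrite -(@sum_pmf R T C n nC); apply: eq_bigr => S _.
  rewrite /pair_pmf /= -mulr_sumr.
  rewrite /subsample_pmf; case: ifP => [/andP[sS /eqP cS]|_]; last by rewrite !mul0r.
  by have [_ [-> _]] := hs m S (eq_ind_r (fun k => (b <= k)%N) bn cS); rewrite mulr1.
pose q m := \sum_SB pair_pmf C n (s m) b SB * (x \in SB.2)%:R.
have q1 m : 1 - q m = \sum_SB pair_pmf C n (s m) b SB * (x \notin SB.2)%:R.
  rewrite -{1}(f_sum m) /q -sumrB; apply: eq_bigr => SB _.
  by case: (x \in SB.2); rewrite ?mulr1 ?mulr0 ?subr0 ?subrr.
have q_ge0 m : 0 <= q m.
  by apply: sumr_ge0 => SB _; apply: mulr_ge0 => //; rewrite ler0n.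
have q_le1 m : 0 <= 1 - q m.
  by rewrite q1; apply: sumr_ge0 => SB _; apply: mulr_ge0 => //; rewrite ler0n.
have incl m : alpha * incl_prob C n (s m) b x = q m.
  rewrite /incl_prob den_pmf // -hn mulfK ?gt_eqF // mulrC divfK ?gt_eqF //.
  apply: eq_bigr => SB _.
  have [->|nz] := eqVneq (pair_pmf C n (s m) b SB) 0; first by rewrite !mul0r.
  case xB: (x \in SB.2); rewrite ?andbF //.
  by rewrite (subsetP (f_supp m SB nz) x xB).
have surv : survival_prob C n J s b x = 1 - \prod_(i : 'I_M * 'I_J) (1 - q i.1).
  rewrite /survival_prob.
  transitivity (\sum_(w : {ffun 'I_M * 'I_J -> {set T} * {set T}})
       \prod_i pair_pmf C n (s i.1) b (w i)
     - \sum_(w : {ffun 'I_M * 'I_J -> {set T} * {set T}})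
       \prod_i (pair_pmf C n (s i.1) b (w i) * (x \notin (w i).2)%:R)).
    rewrite -sumrB; apply: eq_bigr => w _.
    by rewrite indic_union mulrBr mulr1 -big_split.
  rewrite -(bigA_distr_bigA (fun (i : 'I_M * 'I_J) SB => pair_pmf C n (s i.1) b SB)).
  rewrite -(bigA_distr_bigA (fun (i : 'I_M * 'I_J) SB => pair_pmf C n (s i.1) b SB * (x \notin SB.2)%:R)).
  congr (_ - _).
    by rewrite big1 // => i _; rewrite f_sum.
  by apply: eq_bigr => i _; rewrite q1.
rewrite surv.
suff H : \prod_(i : 'I_M * 'I_J) (1 - q i.1) <=
   (1 - alpha * \big[Num.max/0]_(m < M) incl_prob C n (s m) b x) ^+ J by lra.
have qi : forall i : 'I_M * 'I_J, true -> 0 <= 1 - q i.1 <= 1.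
  by move=> i _; rewrite q_le1 /= lerBlDr lerDl q_ge0.
have [->|[m0 ->]] := @max_cases _ _ (fun m => incl_prob C n (s m) b x).
  by rewrite mulr0 subr0 expr1n; apply: prodr_ile1.
rewrite incl.
have -> : \prod_(i : 'I_M * 'I_J) (1 - q i.1) =
          \prod_(m < M) \prod_(j < J) (1 - q m).
  by rewrite pair_big; apply: eq_bigl => -[].
rewrite (bigD1 m0) //= prodr_const card_ord.
apply: ler_piMr; first by apply: exprn_ge0.
apply: prodr_ile1 => m _; rewrite prodr_const card_ord exprn_ge0 //=.
by apply: exprn_ile1 => //; rewrite lerBlDr lerDl q_ge0.
Qed.
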